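(* Let $\omega$ be a primitive third root of unity, $S=\mathbb{C}\langle x,y,z\rangle/(x^2,y^2,z^2)$, and for $t\in\mathbb{C}^*$ let $T_t$ be the quotient of $S$ by the two-sided ideal generated by $(zxy+\omega xyz+\omega^2 yzx)+t(yxz+\omega zyx+\omega^2 xzy)$ and $(zxy+\omega^2 xyz+\omega yzx)+t(yxz+\omega^2 zyx+\omega xzy)$; let $M_t=T_t/(g_t)$ with $g_t=(zxy+xyz+yzx)+t(yxz+zyx+xzy)$. If $-t$ is a primitive $n$th root of unity, then $M_t$ is a finite module over its center.
   Context: Grading: $\deg x=\deg y=\deg z=1$. *)

(* Defs.v *)
From HB Require Import structures.
From mathcomp Require Import all_boot all_order all_algebra.
From mathcomp Require Import reals.
From mathcomp Require Import complex.
From mathcomp.multinomials Require Import monalg.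
Set Implicit Arguments. Unset Strict Implicit. Unset Printing Implicit Defensive.
Import GRing.Theory.
Local Open Scope ring_scope.

Definition freeAlg (R : realType) := {malg (complex R)[{fmonom 'I_3}]}.

Definition gen (R : realType) (i : 'I_3) : freeAlg R := << fmu i >>.
Definition vx (R : realType) : freeAlg R := gen R 0.
Definition vy (R : realType) : freeAlg R := gen R 1.
Definition vz (R : realType) : freeAlg R := gen R 2.

Definition sc (R : realType) (c : complex R) : freeAlg R := c *: (1 : freeAlg R).

Inductive in_ideal (A : pzRingType) (G : A -> Prop) : A -> Prop :=
| ideal_gen g : G g -> in_ideal G g
| ideal_0 : in_ideal G 0
| ideal_add a b : in_ideal G a -> in_ideal G b -> in_ideal G (a + b)
| ideal_mull c a : in_ideal G a -> in_ideal G (c * a)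
| ideal_mulr a c : in_ideal G a -> in_ideal G (a * c).

(* The quotient A/I (I = two-sided ideal generated by G) is a finite module
   over its center: there are finitely many m_1..m_k in A such that every
   class in A/I is a combination sum c_i m_i with each c_i central in A/I. *)
Definition central_mod (A : pzRingType) (G : A -> Prop) (c : A) : Prop :=
  forall b : A, in_ideal G (c * b - b * c).

Definition quotient_finite_over_center (A : pzRingType) (G : A -> Prop) : Prop :=
  exists ms : seq A, forall a : A,
    exists cs : seq A,
      size cs = size ms /\
      (forall c, c \in cs -> central_mod G c) /\
      in_ideal G (a - \sum_(i < size ms) cs`_i * ms`_i).

Section Rels.
Variables (R : realType) (w t : complex R).
Local Notation x := (vx R). Local Notation y := (vy R). Local Notation z := (vz R).
Local Notation S := (@sc R).

Definition rel_f1 : freeAlg R :=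
  (z * x * y + S w * (x * y * z) + S (w ^+ 2) * (y * z * x))
  + S t * (y * x * z + S w * (z * y * x) + S (w ^+ 2) * (x * z * y)).
Definition rel_f2 : freeAlg R :=
  (z * x * y + S (w ^+ 2) * (x * y * z) + S w * (y * z * x))
  + S t * (y * x * z + S (w ^+ 2) * (z * y * x) + S w * (x * z * y)).
Definition rel_g : freeAlg R :=
  (z * x * y + x * y * z + y * z * x) + S t * (y * x * z + z * y * x + x * z * y).

(* defining relations of M_t = T_t/(g_t), T_t = S/(f1,f2), S = C<x,y,z>/(x^2,y^2,z^2) *)
Definition M_rels (r : freeAlg R) : Prop :=
  r = x * x \/ r = y * y \/ r = z * z \/ r = rel_f1 \/ r = rel_f2 \/ r = rel_g.
End Rels.

(* Main.v *)
Require Import Defs.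
From HB Require Import structures.
From mathcomp Require Import all_boot all_order all_algebra.
From mathcomp Require Import reals.
From mathcomp Require Import complex ring zify.
From mathcomp Require Import finmap.
From mathcomp.multinomials Require Import monalg.
Import GRing.Theory Num.Theory.
Local Open Scope ring_scope.
Set Implicit Arguments. Unset Strict Implicit. Unset Printing Implicit Defensive.


Lemma add33 (V : zmodType) (a b c d e f : V) :
  (a + b + c) + (d + e + f) = (a + d) + (b + e) + (c + f).
Proof. by rewrite addrACA (addrACA a b d e). Qed.

Lemma lin6 (K : comNzRingType) (V : lmodType K) (w1 w2 t : K) (A B C A' B' C' : V) :
  (A + w1 *: B + w2 *: C) + t *: (A' + w1 *: B' + w2 *: C') =
  (A + t *: A') + w1 *: (B + t *: B') + w2 *: (C + t *: C').
Proof.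
rewrite !scalerDr !scalerA (mulrC t w1) (mulrC t w2) -!scalerA.
exact: add33.
Qed.

Section Lin3.
Variables (K : comNzRingType) (V : lmodType K) (P Q R : V).
Definition lin3 (a b c : K) := a *: P + b *: Q + c *: R.
Lemma lin3D a b c a' b' c' : lin3 a b c + lin3 a' b' c' = lin3 (a + a') (b + b') (c + c').
Proof. by rewrite /lin3 add33 !scalerDl. Qed.
Lemma lin3Z k a b c : k *: lin3 a b c = lin3 (k * a) (k * b) (k * c).
Proof. by rewrite /lin3 !scalerDr !scalerA. Qed.
End Lin3.

Lemma solve3 (K : fieldType) (V : lmodType K) (w : K) (P Q R : V) :
  w ^+ 3 = 1 -> 1 + w + w ^+ 2 = 0 -> (3%:R : K) != 0 ->
  let g := P + Q + R in
  let f1 := P + w *: Q + w ^+ 2 *: R in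
  let f2 := P + w ^+ 2 *: Q + w *: R in
  [/\ P = 3%:R^-1 *: (g + f1 + f2),
      Q = 3%:R^-1 *: (g + w ^+ 2 *: f1 + w *: f2) &
      R = 3%:R^-1 *: (g + w *: f1 + w ^+ 2 *: f2)].
Proof.
move=> w3 ws h3 g f1 f2.
have eg : g = lin3 P Q R 1 1 1 by rewrite /g /lin3 !scale1r.
have e1 : f1 = lin3 P Q R 1 w (w ^+ 2) by rewrite /f1 /lin3 !scale1r.
have e2 : f2 = lin3 P Q R 1 (w ^+ 2) w by rewrite /f2 /lin3 !scale1r.
have eP : P = lin3 P Q R 1 0 0 by rewrite /lin3 scale1r !scale0r !addr0.
have eQ : Q = lin3 P Q R 0 1 0 by rewrite /lin3 scale1r !scale0r add0r addr0.
have eR : R = lin3 P Q R 0 0 1 by rewrite /lin3 scale1r !scale0r !add0r.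
have w4 : w ^+ 4 = w by rewrite (exprS w 3) w3 mulr1.
have s0 : w + w ^+ 2 = - 1.
  by apply/eqP; rewrite -(inj_eq (addrI 1)) addrA ws subrr.
have i3 : 3%:R^-1 * 3%:R = 1 :> K by rewrite mulVf.
rewrite eg e1 e2 !lin3Z !lin3D !lin3Z.
have t3 : 1 + 1 + 1 = 3%:R :> K by ring.
have c3 : 3%:R^-1 * (1 + 1 + 1) = 1 :> K by rewrite t3 mulVf.
have ca : 3%:R^-1 * (1 + w ^+ 2 + w) = 0.
  rewrite (_ : 1 + w ^+ 2 + w = 1 + w + w ^+ 2); last by ring.
  by rewrite ws mulr0.
have cb : 3%:R^-1 * (1 + w ^+ 2 * w + w * w ^+ 2) = 1.
  rewrite (_ : 1 + w ^+ 2 * w + w * w ^+ 2 = 1 + w ^+ 3 + w ^+ 3); last by ring.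
  by rewrite w3 t3 mulVf.
have cc : 3%:R^-1 * (1 + w * w ^+ 2 + w ^+ 2 * w) = 1.
  rewrite (_ : 1 + w * w ^+ 2 + w ^+ 2 * w = 1 + w ^+ 3 + w ^+ 3); last by ring.
  by rewrite w3 t3 mulVf.
have cd : 3%:R^-1 * (1 + w ^+ 2 * w ^+ 2 + w * w) = 0.
  rewrite (_ : 1 + w ^+ 2 * w ^+ 2 + w * w = 1 + w ^+ 3 * w + w ^+ 2); last by ring.
  by rewrite w3 mul1r ws mulr0.
have ce : 3%:R^-1 * (1 + w * w + w ^+ 2 * w ^+ 2) = 0.
  rewrite (_ : 1 + w * w + w ^+ 2 * w ^+ 2 = 1 + w ^+ 3 * w + w ^+ 2); last by ring.
  by rewrite w3 mul1r ws mulr0.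
have cf : 3%:R^-1 * (1 + w + w ^+ 2) = 0 by rewrite ws mulr0.
split.
- by rewrite {1}eP ?mulr1 c3 ca cf.
- by rewrite {1}eQ !mulr1 ca cb cd.
- by rewrite {1}eR !mulr1 cf ce cc.
Qed.

Lemma rev_rel (K : fieldType) (V : lmodType K) (q : K) (u v : V) :
  q != 0 -> v - q^-1 *: u = (- q^-1) *: (u - q *: v).
Proof.
move=> hq; rewrite scalerBr scalerA mulNr mulVf // !scaleNr scale1r opprK addrC.
by [].
Qed.

Section Basics.
Variable R : realType.
Local Notation A := (freeAlg R).
Local Notation C := (complex R).

Lemma malgUM (k1 k2 : {fmonom 'I_3}) (c1 c2 : C) :
  (<< c1 *g k1 >> : A) * << c2 *g k2 >> = << c1 * c2 *g mmul k1 k2 >>.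
Proof. by rewrite malgM_def fgmulUU. Qed.

Lemma malgCcomm (c : C) (g : A) : g * c%:MP = c%:MP * g.
Proof.
rewrite (monalgE g) mulr_suml mulr_sumr; apply: eq_bigr => k _.
by rewrite !malgUM mulm1 mul1m mulrC.
Qed.

Lemma scalerAr_f (c : C) (g h : A) : g * (c *: h) = c *: (g * h).
Proof. by rewrite -!mul_malgC mulrA malgCcomm mulrA. Qed.

Lemma malgUZ (c : C) (k : {fmonom 'I_3}) : (<< c *g k >> : A) = c *: << k >>.
Proof.
apply/malgP => k'; rewrite mcoeffZ !mcoeffU.
by case: (k == k') => /=; rewrite ?mulr1 ?mulr0.
Qed.

Definition W (s : seq 'I_3) : A := foldr (fun i acc => gen R i * acc) 1 s.

Lemma W_cons i s : W (i :: s) = gen R i * W s. Proof. reflexivity. Qed.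
Lemma W_nil : W [::] = 1. Proof. reflexivity. Qed.
Lemma W_cat s1 s2 : W (s1 ++ s2) = W s1 * W s2.
Proof.
elim: s1 => [|i s IH]; first by rewrite cat0s W_nil mul1r.
rewrite cat_cons W_cons IH (W_cons i s); exact: mulrA.
Qed.

Lemma monom_word (s : seq 'I_3) : (<< FMonom s >> : A) = W s.
Proof.
elim: s => [|i s IH].
  have -> : FMonom [::] = (mone : {fmonom 'I_3}) by apply: val_inj; rewrite /= fm1.
  by [].
have -> : FMonom (i :: s) = mmul (fmu i) (FMonom s).
  by apply: val_inj; rewrite /= fmM fmU.
have h := malgUM (fmu i) (FMonom s) 1 1; rewrite mulr1 in h.
by rewrite -h IH.
Qed.

Lemma decomp (g : A) : g = \sum_(k <- msupp g) g@_k *: W (fmonom_val k).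
Proof.
rewrite {1}(monalgE g); apply: eq_bigr => k _.
by rewrite malgUZ -monom_word fmK.
Qed.

Lemma alg_ind (P : A -> Prop) : P 0 -> (forall a b, P a -> P b -> P (a + b)) ->
  (forall c s, P (c *: W s)) -> forall g, P g.
Proof.
move=> P0 PD PW g; rewrite (decomp g).
by apply: big_ind => // k _; apply: PW.
Qed.


Section IdealGen.
Variable T : pzRingType.
Variable G : T -> Prop.
Local Notation I := (in_ideal G).

Lemma I_opp a : I a -> I (- a).
Proof. by move=> h; rewrite -mulN1r; apply: ideal_mull. Qed.
Lemma I_sub a b : I a -> I b -> I (a - b).
Proof. move=> ha hb; exact (ideal_add ha (I_opp hb)). Qed.
Lemma I_eq a b : a = b -> I a -> I b. Proof. by move->. Qed.

Definition cg (a b : T) := I (a - b).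
Lemma cg_refl a : cg a a. Proof. by rewrite /cg subrr; apply: ideal_0. Qed.
Lemma cg_sym a b : cg a b -> cg b a.
Proof. by move=> h; rewrite /cg -opprB; apply: I_opp. Qed.
Lemma cg_trans a b c : cg a b -> cg b c -> cg a c.
Proof.
move=> h1 h2; rewrite /cg (_ : a - c = (a - b) + (b - c)); first exact: (ideal_add h1 h2).
by rewrite addrA subrK.
Qed.
Lemma cg_add a b a' b' : cg a a' -> cg b b' -> cg (a + b) (a' + b').
Proof.
move=> h1 h2; rewrite /cg (_ : a + b - (a' + b') = (a - a') + (b - b')).
  exact: (ideal_add h1 h2).
by rewrite opprD addrACA.
Qed.
Lemma cg_mull c a b : cg a b -> cg (c * a) (c * b).
Proof. by move=> h; rewrite /cg -mulrBr; apply: ideal_mull. Qed.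
Lemma cg_mulr c a b : cg a b -> cg (a * c) (b * c).
Proof. by move=> h; rewrite /cg -mulrBl; apply: ideal_mulr. Qed.
Lemma cg_0 a : I a -> cg a 0.
Proof. by rewrite /cg subr0. Qed.
Lemma cg_eql a b c : a = b -> cg b c -> cg a c. Proof. by move->. Qed.
Lemma cg_eqr a b c : b = c -> cg a b -> cg a c. Proof. by move->. Qed.

Lemma comm_step (c g x : T) :
  c * (g * x) - g * x * c = (c * g - g * c) * x + g * (c * x - x * c).
Proof. by rewrite mulrBl mulrBr !mulrA addrA subrK. Qed.

Lemma central_add a b : central_mod G a -> central_mod G b -> central_mod G (a + b).
Proof.
move=> ha hb x; rewrite mulrDr mulrDl opprD addrACA; exact: (ideal_add (ha x) (hb x)).
Qed.
Lemma central_mul a b : central_mod G a -> central_mod G b -> central_mod G (a * b).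
Proof.
move=> ha hb x.
have -> : a * b * x - x * (a * b) = a * (b * x - x * b) + (a * x - x * a) * b.
  by rewrite mulrBr mulrBl !mulrA addrA subrK.
exact: (ideal_add (ideal_mull a (hb x)) (ideal_mulr b (ha x))).
Qed.
Lemma central_0 : central_mod G 0.
Proof. by move=> x; rewrite mul0r mulr0 subrr; apply: ideal_0. Qed.
Lemma central_1 : central_mod G 1.
Proof. by move=> x; rewrite mul1r mulr1 subrr; apply: ideal_0. Qed.
End IdealGen.

Section Ideal.
Variable G : A -> Prop.
Local Notation I := (in_ideal G).

Lemma I_scale c a : I a -> I (c *: a).
Proof.
move=> h; have -> : c *: a = (c *: 1) * a by rewrite -scalerAl mul1r.
exact: ideal_mull.
Qed.
Lemma cg_scale k a b : cg G a b -> cg G (k *: a) (k *: b).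
Proof. by move=> h; rewrite /cg -scalerBr; apply: I_scale. Qed.

Lemma central_gen (c : A) :
  (forall i, I (c * gen R i - gen R i * c)) -> central_mod G c.
Proof.
move=> hg; apply: alg_ind.
- by rewrite mulr0 mul0r subrr; apply: ideal_0.
- move=> a b ha hb; rewrite mulrDr mulrDl opprD addrACA; exact: (ideal_add ha hb).
- move=> k s; rewrite scalerAr_f -scalerAl -scalerBr; apply: I_scale.
  elim: s => [|i s IH].
    by rewrite W_nil mulr1 mul1r subrr; apply: ideal_0.
  rewrite W_cons comm_step.
  exact: (ideal_add (ideal_mulr (W s) (hg i)) (ideal_mull (gen R i) IH)).
Qed.

Lemma central_scale k a : central_mod G a -> central_mod G (k *: a).
Proof.
move=> ha x; rewrite -scalerAl scalerAr_f -scalerBr; exact: I_scale.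
Qed.
End Ideal.
End Basics.

Lemma I3 (a : 'I_3) : a = 0 \/ a = 1 \/ a = 2.
Proof.
case: a => [[|[|[|m]]] H]; [left|right;left|right;right|]; try (apply/val_inj => //).
by [].
Qed.

Lemma assoc3 (T : pzRingType) (a b c : T) : a * b * c = a * (b * (c * 1)).
Proof. by rewrite mulr1 mulrA. Qed.
Lemma assoc_sq (T : pzRingType) (x y z : T) : x * (y * (y * z)) = x * (y * y) * z.
Proof. by rewrite !mulrA. Qed.
Lemma assoc_ctx (T : pzRingType) (x y z : T) : x * (y * z) = x * y * z.
Proof. by rewrite mulrA. Qed.

Lemma shape_f (K : comNzRingType) (V : lalgType K) (x y z : V) (w1 w2 t : K) :
  (z * x * y + (w1 *: 1) * (x * y * z) + (w2 *: 1) * (y * z * x))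
  + (t *: 1) * (y * x * z + (w1 *: 1) * (z * y * x) + (w2 *: 1) * (x * z * y)) =
  (z * x * y + t *: (y * x * z)) + w1 *: (x * y * z + t *: (z * y * x))
  + w2 *: (y * z * x + t *: (x * z * y)).
Proof. by rewrite -!scalerAl !mul1r lin6. Qed.

Lemma shape_g (K : comNzRingType) (V : lalgType K) (x y z : V) (t : K) :
  (z * x * y + x * y * z + y * z * x) + (t *: 1) * (y * x * z + z * y * x + x * z * y) =
  (z * x * y + t *: (y * x * z)) + (x * y * z + t *: (z * y * x))
  + (y * z * x + t *: (x * z * y)).
Proof.
rewrite -!scalerAl !mul1r.
have := lin6 1 1 t (z * x * y) (x * y * z) (y * z * x) (y * x * z) (z * y * x) (x * z * y).
by rewrite !scale1r.
Qed.

Definition pw (a b : 'I_3) k := flatten (nseq k [:: a; b]).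
Lemma pwS a b k : pw a b k.+1 = a :: b :: pw a b k. Proof. by []. Qed.
Lemma pw0 a b : pw a b 0 = [::]. Proof. by []. Qed.
Lemma pw_rcons a b k : pw a b k.+1 = pw a b k ++ [:: a; b].
Proof. by elim: k => [|k IH] //; rewrite pwS {1}IH. Qed.
Lemma pw_shift a b k : a :: pw b a k = pw a b k ++ [:: a].
Proof. by elim: k a b => [|k IH] a b //; rewrite !pwS IH. Qed.
Lemma size_pw a b k : size (pw a b k) = (2 * k)%N.
Proof. by elim: k => [|k IH] //; rewrite pwS /= IH mulnS. Qed.

Fixpoint patf (b : 'I_3) (f : bool) (s : seq 'I_3) : bool :=
  if s is x :: s' then ((x == b) == f) && patf b (~~ f) s' else true.

Lemma third (b o e y : 'I_3) : b != o -> o != e -> b != e -> y != b -> y != e -> y = o.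
Proof.
by case: (I3 b) => [->|[->|->]]; case: (I3 o) => [->|[->|->]];
  case: (I3 e) => [->|[->|->]]; case: (I3 y) => [->|[->|->]].
Qed.

Definition pat (s : seq 'I_3) := [exists b : 'I_3, patf b true s || patf b false s].

Lemma patP b f s : patf b f s -> pat s.
Proof. by move=> h; apply/existsP; exists b; case: f h => ->; rewrite ?orbT. Qed.

Definition body (F : 'I_3) (os : seq 'I_3) := flatten [seq [:: F; o] | o <- os].
Lemma body_cons F o os : body F (o :: os) = [:: F, o & body F os]. Proof. by []. Qed.
Lemma body_nil F : body F [::] = [::]. Proof. by []. Qed.
Lemma body_cat F u v : body F (u ++ v) = body F u ++ body F v.
Proof. by rewrite /body map_cat flatten_cat. Qed.
Lemma body_nseq F x i : body F (nseq i x) = pw F x i.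
Proof. by rewrite /body map_nseq. Qed.

Lemma patf_true F m s : (size s <= m)%N -> patf F true s ->
  exists os suf, [/\ s = body F os ++ suf, (size suf <= 1)%N & all (fun o => o != F) os].
Proof.
elim: m s => [|m IH] [|x s1] //=.
- by move=> _ _; exists [::], [::].
- by move=> _ _; exists [::], [::].
move=> hs /andP [/eqP /eqP hx hp]; subst x.
case: s1 hs hp => [|o s2] hs hp.
  by exists [::], [:: F].
move: hp => /= /andP [/eqP ho hp2].
have hoF : o != F by rewrite ho.
have hs2 : (size s2 <= m)%N by move: hs; rewrite ltnS => /ltnW.
have [os [suf [-> hsuf hall]]] := IH s2 hs2 hp2.
by exists (o :: os), suf; split => //=; rewrite hoF hall.
Qed.

Lemma patf_dec F f s : patf F f s -> exists pre os suf,
  [/\ s = pre ++ body F os ++ suf, (size pre <= 1)%N, (size suf <= 1)%N &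
      all (fun o => o != F) os].
Proof.
case: f => hp.
  have [os [suf [-> h1 h2]]] := patf_true (leqnn _) hp.
  by exists [::], os, suf.
case: s hp => [|o s1] hp.
  by exists [::], [::], [::].
move: hp => /= /andP [/eqP ho hp1].
have [os [suf [-> h1 h2]]] := patf_true (leqnn _) hp1.
by exists [:: o], os, suf.
Qed.

Lemma others (F : 'I_3) : exists x y : 'I_3, [/\ x != y, x != F & y != F].
Proof.
case: (I3 F) => [->|[->|->]].
- by exists 1, 2.
- by exists 0, 2.
- by exists 0, 1.
Qed.

Lemma pw_add a b m k : pw a b (m + k) = pw a b m ++ pw a b k.
Proof. by rewrite /pw nseqD flatten_cat. Qed.

Lemma size_body F os : size (body F os) = (2 * size os)%N.
Proof. by elim: os => [|o os IH] //=; rewrite IH mulnS. Qed.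

Lemma long_form (n : nat) (F x y : 'I_3) i j pre suf : x != F -> y != F ->
  (n.+1 <= i)%N \/ (n.+1 <= j)%N -> exists u v (a b : 'I_3), a != b /\
  pre ++ body F (nseq i x ++ nseq j y) ++ suf = u ++ pw a b n ++ a :: v.
Proof.
move=> hxF hyF [hi|hj].
  have [i' ->] : exists i', i = (n.+1 + i')%N by exists (i - n.+1)%N; rewrite subnKC.
  exists (pre ++ [:: F]), (pw F x i' ++ body F (nseq j y) ++ suf), x, F.
  split => //.
  rewrite body_cat body_nseq pw_add pwS pw_shift.
  by rewrite -!catA /= -!catA.
have [j' ->] : exists j', j = (n.+1 + j')%N by exists (j - n.+1)%N; rewrite subnKC.
exists (pre ++ pw F x i ++ [:: F]), (pw F y j' ++ suf), y, F.
split => //.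
rewrite body_cat !body_nseq pw_add pwS pw_shift.
by rewrite -!catA /= -!catA.
Qed.

Lemma ring_E (T : pzRingType) (x e1 e2 y : T) : x * (e1 + e2) * y = x * e1 * y + x * e2 * y.
Proof. by rewrite mulrDr mulrDl. Qed.

Fixpoint wordsn (k : nat) : seq (seq 'I_3) :=
  if k is k'.+1 then [seq i :: s | i <- enum 'I_3, s <- wordsn k'] else [:: [::]].
Fixpoint allw (k : nat) : seq (seq 'I_3) :=
  if k is k'.+1 then allw k' ++ wordsn k'.+1 else wordsn 0.

Lemma mem_wordsn s : s \in wordsn (size s).
Proof.
elim: s => [|i s IH] //=.
by apply: (allpairs_f (fun i s => i :: s)) => //; rewrite mem_enum.
Qed.

Lemma mem_allw s k : (size s <= k)%N -> s \in allw k.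
Proof.
elim: k => [|k IH] hs.
  by move: hs; rewrite leqn0 => /nilP ->.
have e : allw k.+1 = allw k ++ wordsn k.+1 by [].
rewrite e mem_cat; case: (leqP (size s) k) => h; first by rewrite IH.
have -> : k.+1 = size s by apply/eqP; rewrite eqn_leq hs h.
by rewrite mem_wordsn orbT.
Qed.

Section Rels.
Variables (R : realType) (w t : complex R) (n : nat).
Hypotheses (hw : 3.-primitive_root w) (ht : t != 0) (hn : n.-primitive_root (- t)).
Local Notation A := (freeAlg R).
Local Notation G := (M_rels w t).
Local Notation I := (in_ideal G).
Local Notation W := (@W R).

Lemma scE (c : complex R) (X : A) : sc c * X = c *: X.
Proof. by rewrite /sc -scalerAl mul1r. Qed.

Lemma sq_gen a : I (gen R a * gen R a).
Proof.
apply: ideal_gen; rewrite /M_rels.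
by case: (I3 a) => [->|[->|->]]; [left | right; left | right; right; left].
Qed.

Lemma W_sq u a r : cg G (W (u ++ a :: a :: r)) 0.
Proof.
apply: cg_0; rewrite W_cat !W_cons assoc_sq.
exact: (ideal_mulr (W r) (ideal_mull (W u) (sq_gen a))).
Qed.

Lemma w1 : w != 1.
Proof.
apply/negP => /eqP e; have := prim_order_dvd hw 1; rewrite expr1 e eqxx.
by [].
Qed.

Lemma w3 : w ^+ 3 = 1. Proof. exact: prim_expr_order hw. Qed.

Lemma wsum : 1 + w + w ^+ 2 = 0.
Proof.
have h : (w - 1) * (1 + w + w ^+ 2) = 0.
  rewrite (_ : (w - 1) * (1 + w + w ^+ 2) = w ^+ 3 - 1); last by ring.
  by rewrite w3 subrr.
move/eqP: h; rewrite mulf_eq0 subr_eq0 (negbTE w1) /=; exact/eqP.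
Qed.

Lemma three_nz : (3%:R : complex R) != 0. Proof. by rewrite pnatr_eq0. Qed.

Definition rA := vz R * vx R * vy R.
Definition rB := vx R * vy R * vz R.
Definition rC := vy R * vz R * vx R.
Definition rA' := vy R * vx R * vz R.
Definition rB' := vz R * vy R * vx R.
Definition rC' := vx R * vz R * vy R.

Lemma solve_I (P Q Rr : A) : I (P + Q + Rr) -> I (P + w *: Q + w ^+ 2 *: Rr) ->
  I (P + w ^+ 2 *: Q + w *: Rr) -> [/\ I P, I Q & I Rr].
Proof.
move=> hg h1 h2.
have [eP eQ eR] := solve3 P Q Rr w3 wsum three_nz.
split.
- rewrite eP; apply: I_scale; exact: (ideal_add (ideal_add hg h1) h2).
- rewrite eQ; apply: I_scale.
  exact: (ideal_add (ideal_add hg (I_scale _ h1)) (I_scale _ h2)).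
- rewrite eR; apply: I_scale.
  exact: (ideal_add (ideal_add hg (I_scale _ h1)) (I_scale _ h2)).
Qed.

Lemma I_g : I ((rA + t *: rA') + (rB + t *: rB') + (rC + t *: rC')).
Proof.
have e : rel_g t = (rA + t *: rA') + (rB + t *: rB') + (rC + t *: rC') :=
  shape_g (vx R) (vy R) (vz R) t.
rewrite -e; apply: ideal_gen; by rewrite /M_rels; right; right; right; right; right.
Qed.

Lemma I_f1 : I ((rA + t *: rA') + w *: (rB + t *: rB') + w ^+ 2 *: (rC + t *: rC')).
Proof.
have e : rel_f1 w t = (rA + t *: rA') + w *: (rB + t *: rB') + w ^+ 2 *: (rC + t *: rC') :=
  shape_f (vx R) (vy R) (vz R) w (w ^+ 2) t.
rewrite -e; apply: ideal_gen; by rewrite /M_rels; right; right; right; left.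
Qed.

Lemma I_f2 : I ((rA + t *: rA') + w ^+ 2 *: (rB + t *: rB') + w *: (rC + t *: rC')).
Proof.
have e : rel_f2 w t = (rA + t *: rA') + w ^+ 2 *: (rB + t *: rB') + w *: (rC + t *: rC') :=
  shape_f (vx R) (vy R) (vz R) (w ^+ 2) w t.
rewrite -e; apply: ideal_gen; by rewrite /M_rels; right; right; right; right; left.
Qed.

Lemma base_rels : [/\ I (rA + t *: rA'), I (rB + t *: rB') & I (rC + t *: rC')].
Proof. exact: solve_I I_g I_f1 I_f2. Qed.

Lemma qnz : - t != 0. Proof. by rewrite oppr_eq0. Qed.
Lemma qn : (- t) ^+ n = 1. Proof. exact: prim_expr_order hn. Qed.
Lemma qin : ((- t)^-1) ^+ n = 1. Proof. by rewrite exprVn qn invr1. Qed.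

Lemma cgq (u v : A) : I (u + t *: v) -> cg G u ((- t) *: v).
Proof. by rewrite /cg scaleNr opprK. Qed.
Lemma cgqi (u v : A) : I (u + t *: v) -> cg G v ((- t)^-1 *: u).
Proof. move=> h; rewrite /cg rev_rel ?qnz //; apply: I_scale; exact: cgq. Qed.

Lemma eA : rA = W [:: 2; 0; 1]. Proof. exact: assoc3. Qed.
Lemma eB : rB = W [:: 0; 1; 2]. Proof. exact: assoc3. Qed.
Lemma eC : rC = W [:: 1; 2; 0]. Proof. exact: assoc3. Qed.
Lemma eA' : rA' = W [:: 1; 0; 2]. Proof. exact: assoc3. Qed.
Lemma eB' : rB' = W [:: 2; 1; 0]. Proof. exact: assoc3. Qed.
Lemma eC' : rC' = W [:: 0; 2; 1]. Proof. exact: assoc3. Qed.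

Lemma rel3 (a b c : 'I_3) : a != b -> b != c -> a != c ->
  exists k : complex R, k ^+ n = 1 /\ cg G (W [:: a; b; c]) (k *: W [:: c; b; a]).
Proof.
have [hA hB hC] := base_rels.
rewrite eA eA' in hA; rewrite eB eB' in hB; rewrite eC eC' in hC.
case: (I3 a) => [->|[->|->]]; case: (I3 b) => [->|[->|->]];
  case: (I3 c) => [->|[->|->]] => // _ _ _.
- by exists (- t); split; [exact: qn | exact: (cgq hB)].
- by exists ((- t)^-1); split; [exact: qin | exact: (cgqi hC)].
- by exists ((- t)^-1); split; [exact: qin | exact: (cgqi hA)].
- by exists (- t); split; [exact: qn | exact: (cgq hC)].
- by exists (- t); split; [exact: qn | exact: (cgq hA)].
- by exists ((- t)^-1); split; [exact: qin | exact: (cgqi hB)].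
Qed.

Lemma sc_ctx (X Y Z : A) k : X * ((k *: Y) * Z) = k *: (X * (Y * Z)).
Proof. by rewrite -scalerAl scalerAr_f. Qed.

Lemma cg_ctx (u v : seq 'I_3) k :
  cg G (W u) (k *: W v) -> forall p s, cg G (W (p ++ u ++ s)) (k *: W (p ++ v ++ s)).
Proof.
move=> h p s; rewrite !W_cat -sc_ctx.
exact: (cg_mull (W p) (cg_mulr (W s) h)).
Qed.

Lemma tri (a b c : 'I_3) : a != b -> b != c -> a != c ->
  exists k : complex R, k ^+ n = 1 /\ forall p r,
    cg G (W (p ++ a :: b :: c :: r)) (k *: W (p ++ c :: b :: a :: r)).
Proof.
move=> h1 h2 h3; have [k [kn hk]] := rel3 h1 h2 h3.
exists k; split; first exact: kn.
move=> p r.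
have := cg_ctx hk p r.
rewrite (_ : [:: a; b; c] ++ r = a :: b :: c :: r) // (_ : [:: c; b; a] ++ r = c :: b :: a :: r) //.
Qed.

Lemma n_gt0 : (0 < n)%N. Proof. exact: prim_order_gt0 hn. Qed.

Lemma W1 a : gen R a = W [:: a]. Proof. by rewrite W_cons W_nil mulr1. Qed.

Definition Ecen (a b : 'I_3) : A := W (pw a b n) + W (pw b a n).

Lemma cg_trans3 (x y z v : A) : cg G x y -> cg G v z -> cg G y z -> cg G x v.
Proof. move=> h1 h2 h3; apply: (cg_trans h1); apply: (cg_trans h3); exact: cg_sym. Qed.

Lemma cg_add0r (x y z : A) : cg G x z -> cg G y 0 -> cg G (x + y) z.
Proof. by move=> h1 h2; rewrite -[z]addr0; apply: cg_add. Qed.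
Lemma cg_add0l (x y z : A) : cg G x 0 -> cg G y z -> cg G (x + y) z.
Proof. by move=> h1 h2; rewrite -[z]add0r; apply: cg_add. Qed.

Lemma Ecen_a (a b : 'I_3) : cg G (Ecen a b * gen R a) (gen R a * Ecen a b).
Proof.
rewrite /Ecen W1 mulrDl mulrDr -!W_cat !cat1s -pw_shift.
have [m hm] : exists m, n = m.+1 by exists n.-1; rewrite prednK // n_gt0.
have e1 : pw b a n ++ [:: a] = (pw b a m ++ [:: b]) ++ a :: a :: [::].
  by rewrite hm pw_rcons -!catA.
have e2 : a :: pw a b n = [::] ++ a :: a :: (b :: pw a b m) by rewrite hm.
apply: (@cg_trans _ _ _ (W (a :: pw b a n))).
  apply: cg_add0r; first exact: cg_refl.
  rewrite e1; exact: W_sq.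
apply: cg_sym; apply: cg_add0l; last exact: cg_refl.
rewrite e2; exact: W_sq.
Qed.

Lemma bubble_alt (c a b : 'I_3) k0 : (forall p r,
    cg G (W (p ++ c :: a :: b :: r)) (k0 *: W (p ++ b :: a :: c :: r))) ->
  forall m, cg G (W (c :: pw a b m)) (k0 ^+ m *: W (pw b a m ++ [:: c])).
Proof.
move=> hk; elim=> [|m IH].
  by rewrite expr0 scale1r; exact: cg_refl.
have h1 := hk [::] (pw a b m).
have h2 := cg_ctx IH [:: b; a] [::].
rewrite !cats0 in h2.
rewrite pwS; apply: (cg_trans h1); rewrite exprS -scalerA; apply: cg_scale.
by rewrite pwS.
Qed.

Lemma Ecen_sym a b : Ecen a b = Ecen b a. Proof. by rewrite /Ecen addrC. Qed.

Lemma Ecen_central (a b : 'I_3) : a != b -> central_mod G (Ecen a b).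
Proof.
move=> hab; apply: central_gen => i.
case: (eqVneq i a) => [->|hia]; first exact: (Ecen_a a b).
case: (eqVneq i b) => [->|hib]; first by rewrite Ecen_sym; exact: (Ecen_a b a).
have [k1 [k1n hk1]] := tri hia hab hib.
have hba : b != a by rewrite eq_sym.
have [k2 [k2n hk2]] := tri hib hba hia.
have b1 := bubble_alt hk1 n; rewrite k1n scale1r in b1.
have b2 := bubble_alt hk2 n; rewrite k2n scale1r in b2.
apply: cg_sym.
rewrite /Ecen W1 mulrDl mulrDr -!W_cat !cat1s addrC.
exact: (cg_add b2 b1).
Qed.

Lemma cg_chain (u v v' : A) k k' : cg G u (k *: v) -> cg G v (k' *: v') ->
  cg G u ((k * k') *: v').
Proof. move=> h1 h2; apply: (cg_trans h1); rewrite -scalerA; exact: cg_scale. Qed.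

Lemma cg_chain0 (u v : A) k : cg G u (k *: v) -> cg G v 0 -> cg G u 0.
Proof.
move=> h1 h2; apply: (cg_trans h1); rewrite -(scaler0 _ k); exact: cg_scale.
Qed.

Lemma cg_consl l (u v : seq 'I_3) k : cg G (W u) (k *: W v) ->
  cg G (W (l :: u)) (k *: W (l :: v)).
Proof. by move=> h; have := cg_ctx h [:: l] [::]; rewrite !cats0. Qed.

Lemma cg_consl0 l (u : seq 'I_3) : cg G (W u) 0 -> cg G (W (l :: u)) 0.
Proof. by move=> h; rewrite W_cons -(mulr0 (gen R l)); apply: cg_mull. Qed.

Lemma cg_W1 (u : seq 'I_3) : cg G (W u) (1 *: W u).
Proof. rewrite scale1r; exact: cg_refl. Qed.

Definition RES (P : seq 'I_3 -> bool) (s : seq 'I_3) (sz : nat) :=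
  cg G (W s) 0 \/ exists k s', [/\ P s', size s' = sz & cg G (W s) (k *: W s')].

Lemma bubble1 (b o e : 'I_3) : b != o -> o != e -> b != e -> forall m s1,
  (size s1 <= m)%N -> patf b true s1 -> RES (patf o false) (e :: o :: s1) (size s1).+2.
Proof.
move=> hbo hoe hbe; have hob : o != b by rewrite eq_sym.
have heo : e != o by rewrite eq_sym.
have heb : e != b by rewrite eq_sym.
have [k [_ hk]] := tri heo hob heb.
elim=> [|m IH] s1.
  case: s1 => [_ _|? ? //]; right; exists 1, [:: e; o]; split => //.
    by rewrite /= (negbTE heo) !eqxx.
  exact: cg_W1.
case: s1 => [|x s2] hs hp.
  right; exists 1, [:: e; o]; split => //; first by rewrite /= (negbTE heo) !eqxx.
  exact: cg_W1.
move: hp => /= /andP [/eqP /eqP hx hp2]; subst x.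
case: s2 hs hp2 => [|y s3] hs hp2.
  right; exists 1, [:: e; o; b]; split => //; first by rewrite /= (negbTE heo) !eqxx (negbTE hbo).
  exact: cg_W1.
move: hp2 => /= /andP [/eqP hy hp3]; have hyb : y != b by rewrite hy.
have h1 := hk [::] (y :: s3).
case: (eqVneq y e) => [hye|hye].
  left; apply: (cg_chain0 h1); rewrite hye; exact: (W_sq [:: b; o] e s3).
have hyo := third hbo hoe hbe hyb hye.
have hs3 : (size s3 <= m)%N by move: hs => /=; rewrite ltnS => /ltnW.
case: (IH s3 hs3 hp3) => [h0|[k' [s'' [hp'' hsz h2]]]].
  left; apply: (cg_chain0 h1); rewrite hyo.
  by have := cg_consl0 b (cg_consl0 o h0).
right; exists (k * k'), [:: b, o & s'']; split.
- by rewrite /= (negbTE hbo) !eqxx hp''.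
- by rewrite /= hsz.
- apply: (cg_chain h1); rewrite hyo; exact: (cg_consl b (cg_consl o h2)).
Qed.

Lemma RES_mono (P Q : pred (seq 'I_3)) u sz : (forall s, P s -> Q s) ->
  RES P u sz -> RES Q u sz.
Proof.
move=> hPQ [h|[k [s' [hp hs hc]]]]; [by left | right].
by exists k, s'; split => //; apply: hPQ.
Qed.

Lemma prepend l b f s : patf b f s -> RES pat (l :: s) (size s).+1.
Proof.
case: s => [|x s1] hp.
  right; exists 1, [:: l]; split => //; last exact: cg_W1.
  by apply: (@patP l true); rewrite /= eqxx.
move: hp => /= /andP [hx hp1].
case: f hx hp1 => hx hp1.
  move: hx => /eqP /eqP hx; subst x.
  case: (eqVneq l b) => [->|hlb].
    by left; exact: (W_sq [::] b s1).
  right; exists 1, [:: l, b & s1]; split => //; last exact: cg_W1.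
  by apply: (@patP b false); rewrite /= (negbTE hlb) !eqxx hp1.
move: hx => /eqP hx; have hxb : x != b by rewrite hx.
case: (eqVneq l b) => [->|hlb].
  right; exists 1, [:: b, x & s1]; split => //; last exact: cg_W1.
  by apply: (@patP b true); rewrite /= (negbTE hxb) !eqxx hp1.
case: (eqVneq l x) => [->|hlx].
  by left; exact: (W_sq [::] x s1).
have hbx : b != x by rewrite eq_sym.
have hxl : x != l by rewrite eq_sym.
have hbl : b != l by rewrite eq_sym.
have := bubble1 hbx hxl hbl (leqnn (size s1)) hp1.
by apply: RES_mono => s' hs'; apply: (patP hs').
Qed.

Lemma norm1 s : RES pat s (size s).
Proof.
elim: s => [|l s0 IH].
  right; exists 1, [::]; split => //; last exact: cg_W1.
  by apply: (@patP 0 true).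
case: IH => [h0|[k [s0' [hp hsz hc]]]].
  left; apply: (cg_consl0 l h0).
move/existsP: hp => [b /orP hb].
have hpre : RES pat (l :: s0') (size s0').+1.
  by case: hb => hb; apply: (prepend l hb).
case: hpre => [h0|[k' [s' [hp' hsz' hc']]]].
  by left; apply: (cg_chain0 (cg_consl l hc)).
right; exists (k * k'), s'; split; [exact: hp' | by rewrite hsz' hsz | ].
apply: (cg_chain (cg_consl l hc) hc').
Qed.

Lemma move_y (F x y : 'I_3) : y != F -> F != x -> y != x -> exists k : complex R,
  forall i r, cg G (W (body F (y :: nseq i x ++ r))) (k ^+ i *: W (body F (nseq i x ++ y :: r))).
Proof.
move=> hyF hFx hyx; have [k [_ hk]] := tri hyF hFx hyx.
exists k; elim=> [|i IH] r.
  by rewrite expr0; apply: cg_W1.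
have h1 := hk [:: F] (body F (nseq i x ++ r)).
have h2 := cg_ctx (IH r) [:: F; x] [::]; rewrite !cats0 in h2.
have e1 : body F (y :: nseq i.+1 x ++ r) = [:: F] ++ [:: y, F, x & body F (nseq i x ++ r)].
  by [].
have e2 : [:: F] ++ [:: x, F, y & body F (nseq i x ++ r)] = [:: F; x] ++ body F (y :: nseq i x ++ r).
  by [].
have e3 : body F (nseq i.+1 x ++ y :: r) = [:: F; x] ++ body F (nseq i x ++ y :: r).
  by [].
rewrite e1 e3 exprS; apply: (cg_chain h1); rewrite e2; apply: h2.
Qed.

Lemma sortb (F x y : 'I_3) : x != y -> x != F -> y != F -> forall os,
  all (fun o => o != F) os -> exists k i j, (i + j = size os)%N /\
    cg G (W (body F os)) (k *: W (body F (nseq i x ++ nseq j y))).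
Proof.
move=> hxy hxF hyF; have hFx : F != x by rewrite eq_sym.
have hFy : F != y by rewrite eq_sym.
have hyx : y != x by rewrite eq_sym.
have [k' hk'] := move_y hyF hFx hyx.
elim=> [|o os IH].
  by move=> _; exists 1, 0%N, 0%N; split => //; apply: cg_W1.
move=> hall0; have /andP [hoF hall] : (o != F) && all (fun o => o != F) os := hall0. have [k [i [j [hij hc]]]] := IH hall.
have hc2 := cg_ctx hc [:: F; o] [::]; rewrite !cats0 in hc2.
have e1 : body F (o :: os) = [:: F; o] ++ body F os by [].
case: (eqVneq o x) => [hox|hox].
  exists k, i.+1, j; split; first by rewrite addSn hij.
  rewrite e1; apply: (cg_trans hc2); rewrite hox; apply: cg_refl.
have hoy : o = y := third hFy hyx hFx hoF hox.
exists (k * k' ^+ i), i, j.+1; split; first by rewrite addnS hij.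
rewrite e1; apply: (cg_chain hc2); rewrite hoy.
have e2 : [:: F; y] ++ body F (nseq i x ++ nseq j y) = body F (y :: nseq i x ++ nseq j y) by [].
rewrite e2; apply: hk'.
Qed.

Lemma reduce_E (a b : 'I_3) u v : a != b ->
  cg G (W (u ++ pw a b n ++ a :: v)) (Ecen a b * W (u ++ a :: v)).
Proof.
move=> hab; have hc := Ecen_central hab (W u).
have [m hm] : exists m, n = m.+1 by exists n.-1; rewrite prednK // n_gt0.
apply: cg_sym.
apply: (@cg_trans _ _ _ (W u * Ecen a b * W (a :: v))).
  rewrite W_cat assoc_ctx; apply: cg_mulr; apply: hc.
rewrite /Ecen ring_E -!W_cat -!catA.
apply: cg_add0r; first exact: cg_refl.
have e : u ++ pw b a n ++ a :: v = (u ++ pw b a m ++ [:: b]) ++ a :: a :: v.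
  by rewrite hm pw_rcons -!catA.
rewrite e; apply: W_sq.
Qed.

Lemma reduce_long s : (4 * n + 4 <= size s)%N -> cg G (W s) 0 \/
  exists k (a b : 'I_3) s'', [/\ a != b, (size s'' < size s)%N &
     cg G (W s) (k *: (Ecen a b * W s''))].
Proof.
move=> hs.
case: (norm1 s) => [h0|[k [s' [hp hsz hc]]]]; first by left.
right.
move/existsP: hp => [F /orP hF].
have [pre [os [suf [es' hpre hsuf hall]]]] : exists pre os suf,
  [/\ s' = pre ++ body F os ++ suf, (size pre <= 1)%N, (size suf <= 1)%N &
      all (fun o => o != F) os].
  by case: hF => hF; apply: (patf_dec hF).
have [x [y [hxy hxF hyF]]] := others F.
have [k2 [i [j [hij hc2]]]] := sortb hxy hxF hyF hall.
have hc3 := cg_ctx hc2 pre suf.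
have hsz2 : (size s = size pre + 2 * size os + size suf)%N.
  by rewrite -hsz es' !size_cat size_body addnA.
have hn0 := n_gt0.
have hij' : (n.+1 <= i)%N \/ (n.+1 <= j)%N.
  case: (leqP n.+1 i) => hi; [by left | right].
  apply: contraTT hs => hj; rewrite -ltnNge hsz2; rewrite -ltnNge in hj.
  rewrite -hij in hsz2 *; lia.
have [u [v [a [b [hab ef]]]]] := long_form pre suf hxF hyF hij'.
rewrite ef in hc3.
have hc4 := reduce_E u v hab.
exists (k * k2 * 1), a, b, (u ++ a :: v); split; [exact: hab | | ].
  have h1 := congr1 size ef; rewrite !size_cat size_body size_cat !size_nseq size_pw /= in h1.
  rewrite !size_cat /= hsz2 -hij; lia.
have hc5 : cg G (W (u ++ pw a b n ++ a :: v)) (1 *: (Ecen a b * W (u ++ a :: v))).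
  by rewrite scale1r.
apply: (cg_chain (cg_chain hc (cg_eql (congr1 W es') hc3)) hc5).
Qed.

Definition Kb := (4 * n + 3)%N.
Definition ms : seq A := [seq W s | s <- allw Kb].
Definition Sp (a : A) := exists f : nat -> A, (forall j, central_mod G (f j)) /\
  cg G a (\sum_(j < size ms) f j * ms`_j).

Lemma Sp_ms s : s \in allw Kb -> Sp (W s).
Proof.
move=> hs.
have hj : (index s (allw Kb) < size ms)%N by rewrite size_map index_mem.
exists (fun j => if j == index s (allw Kb) then 1 else 0); split.
  by move=> j; case: ifP => _; [apply: central_1 | apply: central_0].
rewrite (bigD1 (Ordinal hj)) // big1 /=.
  rewrite eqxx mul1r addr0 (nth_map [::]) ?index_mem // nth_index //.
  exact: cg_refl.
move=> j hj2; have -> : (nat_of_ord j == index s (allw Kb)) = false.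
  by apply/negbTE; move: hj2; apply: contra => /eqP h; apply/eqP/val_inj.
by rewrite mul0r.
Qed.

Lemma Sp_0 : Sp 0.
Proof.
exists (fun _ => 0); split; first by move=> _; apply: central_0.
rewrite big1; first exact: cg_refl.
by move=> j _; rewrite mul0r.
Qed.

Lemma Sp_add a b : Sp a -> Sp b -> Sp (a + b).
Proof.
move=> [f [hf ha]] [g [hg hb]]; exists (fun j => f j + g j); split.
  move=> j; exact: (central_add (hf j) (hg j)).
have -> : \sum_(j < size ms) (f j + g j) * ms`_j =
  \sum_(j < size ms) f j * ms`_j + \sum_(j < size ms) g j * ms`_j.
  by rewrite -big_split; apply: eq_bigr => j _; rewrite mulrDl.
exact: (cg_add ha hb).
Qed.

Lemma Sp_mul c a : central_mod G c -> Sp a -> Sp (c * a).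
Proof.
move=> hc [f [hf ha]]; exists (fun j => c * f j); split.
  move=> j; exact: (central_mul hc (hf j)).
have -> : \sum_(j < size ms) c * f j * ms`_j = c * \sum_(j < size ms) f j * ms`_j.
  rewrite mulr_sumr; apply: eq_bigr => j _; exact: (esym (assoc_ctx _ _ _)).
exact: (cg_mull c ha).
Qed.

Lemma Sp_cg a b : cg G a b -> Sp b -> Sp a.
Proof. move=> h [f [hf hb]]; exists f; split => //; exact: (cg_trans h hb). Qed.

Lemma Sp_scale k a : Sp a -> Sp (k *: a).
Proof.
move=> h; have -> : k *: a = (k *: 1) * a by rewrite -scalerAl mul1r.
apply: Sp_mul => //; apply: central_scale; apply: central_1.
Qed.

Lemma Sp_words N s : (size s <= N)%N -> Sp (W s).
Proof.
elim: N s => [|N IH] s hs.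
  by apply: Sp_ms; apply: mem_allw; apply: (leq_trans hs).
case: (leqP (size s) Kb) => hK; first by apply: Sp_ms; apply: mem_allw.
have hl : (4 * n + 4 <= size s)%N by rewrite /Kb in hK; lia.
case: (reduce_long hl) => [h0|[k [a [b [s'' [hab hsz hc]]]]]].
  exact: (Sp_cg h0 Sp_0).
apply: (Sp_cg hc); apply: Sp_scale; apply: Sp_mul; first exact: Ecen_central.
by apply: IH; rewrite -ltnS; apply: (leq_trans hsz).
Qed.

Lemma Sp_all g : Sp g.
Proof.
apply: alg_ind; [exact: Sp_0 | exact: Sp_add | ].
move=> c s; apply: Sp_scale; exact: (Sp_words (leqnn _)).
Qed.
End Rels.

Theorem mainTheorem13 (R : realType) (w t : complex R) (n : nat) :
  3.-primitive_root w ->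
  t != 0 ->
  n.-primitive_root (- t) ->
  quotient_finite_over_center (M_rels w t).
Proof.
move=> hw ht hn.
exists (ms R n) => a.
have [f [hf hc]] := Sp_all hw ht hn a.
exists (mkseq f (size (ms R n))); split; [|split].
- by rewrite size_mkseq.
- by move=> c /mapP [j _ ->]; apply: hf.
- have -> : \sum_(i < size (ms R n)) (mkseq f (size (ms R n)))`_i * (ms R n)`_i =
            \sum_(i < size (ms R n)) f i * (ms R n)`_i.
    by apply: eq_bigr => j _; rewrite nth_mkseq.
  exact: hc.
Qed.
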